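(* Let $\mathcal{G}$ be an $A$-compatible multidigraph. (i) Let $\zeta$ be a spanning forest of $\mathcal{G}$ and $\tau$ a connected component of $\zeta$. If $\tau$ contains a node in $\mathcal{N}_i$ for some $i\ge0$, then the root of $\tau$ is in $\mathcal{N}_i\cup\mathcal{N}_0$. (ii) For $B\subseteq\mathcal{N}$ with $|B|=|F|$, $\Theta_\mathcal{G}(F,B)=\emptyset$ if $B$ contains two elements of $\mathcal{N}_i$ for some $i>0$.
   Context: $R$ is a partially ordered commutative ring. Let $d\ge0$, $m_0,m_1,\dots,m_d$ nonnegative integers with $m=m_0+m_1+\cdots+m_d$. $A\in R^{m\times m}$ and $b\in R^m$ have block form: for $i=1,\dots,d$ the rows with indices in $\mathcal{N}_i=\{1+\sum_{j<i}m_j,\dots,\sum_{j\le i}m_j\}$ have the form $(0\cdots0\ A_i\ 0\cdots0)$ with $A_i\in R^{m_i\times m_i}$ occupying the columns indexed by $\mathcal{N}_i$, and the corresponding part $b^i$ of $b$ has at most one nonzero entry; the last $m_0$ rows form an arbitrary $A_0\in R^{m_0\times m}$ with arbitrary $b^0\in R^{m_0}$. Let $\mathcal{N}=\{1,\dots,m+1\}$ and $\mathcal{N}_0=\{m-m_0+1,\dots,m+1\}$. Fix $j_i\in\mathcal{N}_i$ ($i=1,\dots,d$) such that $b_j=0$ for all $j\le m-m_0$ with $j\notin\{j_1,\dots,j_d\}$, and let $F=\{j_1,\dots,j_d,m+1\}$. A multidigraph $\mathcal{G}=(\mathcal{N},\mathcal{E})$ has source/target maps $s,t$, no self-loops, labeling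 $\pi\colon\mathcal{E}\to R$, and Laplacian $L_{ij}=\sum_{e:s(e)=j,t(e)=i}\pi(e)$ ($i\ne j$), $L_{ii}=-\sum_{k\ne i}L_{ki}$. $\mathcal{G}$ is $A$-compatible if (i) there is no edge from a node in $\mathcal{N}_i$ ($i\ge0$) to a node in $\mathcal{N}_j$ with $i\ne j$, $j\ge1$; (ii) for $\ell\notin\{j_1,\dots,j_d,m+1\}$, the $\ell$-th row of $L$ equals the $\ell$-th row of the $m\times(m+1)$ matrix $(A\,|\,b)$. Trees/forests: subgraphs whose underlying undirected graph is acyclic (connected for trees); a tree is rooted at $N$ if $N$ is its only node without outgoing edges; spanning means node set $\mathcal{N}$. For $F,B\subseteq\mathcal{N}$ with $|F|=|B|$, $\Theta_\mathcal{G}(F,B)$ is the set of spanning forests with $|B|$ components, each containing a node of $F$ and being a tree rooted at a node of $B$. *)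

(* Defs.v *)
From mathcomp Require Import all_boot all_order all_algebra.
Set Implicit Arguments. Unset Strict Implicit. Unset Printing Implicit Defensive.
Import Order.TTheory GRing.Theory.

Definition po_ring (R : comPzRingType) (le : rel R) : Prop :=
  [/\ reflexive le, antisymmetric le, transitive le,
      (forall x y z, le x y -> le (x + z)%R (y + z)%R) &
      (forall x y, le 0%R x -> le 0%R y -> le 0%R (x * y)%R)].

(* Blocks of indices (paper's 1-based indices, as natural numbers).    *)
Definition inNpos (mb : nat -> nat) (i k : nat) : bool :=
  ((\sum_(1 <= j < i) mb j < k) && (k <= \sum_(1 <= j < i.+1) mb j))%N.

Definition inN0 (mb : nat -> nat) (m k : nat) : bool :=
  (m - mb 0%N < k)%N && (k <= m.+1)%N.

Definition inN (mb : nat -> nat) (m i k : nat) : bool :=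
  if i == 0%N then inN0 mb m k else inNpos mb i k.

(* Nodes: the node v : 'I_(m.+1) is the paper's node v + 1, so that     *)
(* the node set is N = {1, ..., m+1}.                                  *)
Notation node m := 'I_(m.+1).
Definition pidx (m : nat) (v : node m) : nat := (v : nat).+1.

Definition Fset (m d : nat) (jsel : nat -> nat) : {set node m} :=
  [set v : node m | (pidx v == m.+1)
     || [exists i : 'I_d.+1, (0 < (i : nat))%N && (jsel i == pidx v)]].

Section Graphs.
Variable R : comPzRingType.
Variable m : nat.
Variable E : finType.
Variables s t : E -> node m.
Variable pi : E -> R.

Definition offL (i j : node m) : R := (\sum_(e | (s e == j) && (t e == i)) pi e)%R.
Definition laplacian : 'M[R]_(m.+1) :=
  \matrix_(i, j) (if i == j then - \sum_(k | k != i) offL k i else offL i j)%R.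

Definition joins (e : E) (u v : node m) : bool :=
  ((s e == u) && (t e == v)) || ((s e == v) && (t e == u)).

(* A subgraph with node set N is given by its edge set S.
   An (undirected) cycle in S: pairwise distinct edges es_0, ..., es_k
   of S and pairwise distinct vertices vs_0, ..., vs_k such that es_l
   joins vs_l and vs_(l+1 mod k+1).  (Parallel edges u->v, v->u or
   u->v, u->v form a cycle of length 2 of the underlying multigraph.) *)
Definition has_cycle (S : {set E}) : Prop :=
  exists k (es : 'I_k.+1 -> E) (vs : 'I_k.+1 -> node m),
    [/\ injective es, injective vs, (forall l, es l \in S) &
        forall l, joins (es l) (vs l) (vs (ordS l))].

Definition forest (S : {set E}) : Prop := ~ has_cycle S.

Definition adjS (S : {set E}) : rel (node m) :=
  fun u v => [exists e in S, joins e u v].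
Definition comp_of (S : {set E}) (u : node m) : {set node m} :=
  [set v | connect (adjS S) u v].
Definition components (S : {set E}) : {set {set node m}} :=
  [set comp_of S u | u : node m].

(* the component tau with node set C (and edges of S inside C) is a tree
   rooted at r: r is the only node of C without outgoing edges in tau *)
Definition rooted_at (S : {set E}) (C : {set node m}) (r : node m) : Prop :=
  r \in C /\
  forall v, v \in C ->
    ((~~ [exists e in S, (s e == v) && (t e \in C)]) <-> v = r).

Definition Theta (F B : {set node m}) (S : {set E}) : Prop :=
  [/\ forest S, #|components S| = #|B| &
      forall C, C \in components S ->
        (exists2 f, f \in F & f \in C) /\ (exists2 r, r \in B & rooted_at S C r)].

End Graphs.

Definition Abmx (R : comPzRingType) (m : nat) (A : 'M[R]_m) (b : 'cV[R]_m)
  : 'M[R]_(m, m.+1) := castmx (erefl m, addn1 m) (row_mx A b).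

Definition A_compatible (R : comPzRingType) (d m : nat) (mb : nat -> nat)
  (jsel : nat -> nat) (A : 'M[R]_m) (b : 'cV[R]_m)
  (E : finType) (s t : E -> node m) (pi : E -> R) : Prop :=
  (forall e (i j : nat), (i <= d)%N -> (1 <= j <= d)%N -> i <> j ->
     inN mb m i (pidx (s e)) -> ~~ inN mb m j (pidx (t e))) /\
  (forall l : 'I_m, widen_ord (leqnSn m) l \notin Fset m d jsel ->
     forall j : node m,
       laplacian s t pi (widen_ord (leqnSn m) l) j = Abmx A b l j).

(* Main.v *)
Require Import Defs.
From mathcomp Require Import all_boot all_order all_algebra.
From mathcomp Require Import zify.
Set Implicit Arguments. Unset Strict Implicit. Unset Printing Implicit Defensive.

Section Aux.
Variables (m : nat) (E : finType) (s t : E -> node m).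

Lemma adjS_sym (S : {set E}) : symmetric (adjS s t S).
Proof.
move=> u v; apply/existsP/existsP => -[e /andP[eS j]]; exists e;
  by rewrite eS /= /joins orbC.
Qed.

Lemma comp_mem (S : {set E}) C w : C \in components s t S -> w \in C -> C = comp_of s t S w.
Proof.
case/imsetP => u _ ->; rewrite inE => uw.
have sym := sym_connect_sym (adjS_sym S).
apply/setP => z; rewrite !inE.
apply/idP/idP => H.
- rewrite sym in uw; exact: connect_trans uw H.
- exact: connect_trans uw H.
Qed.

Lemma comp_share (S : {set E}) C C' w : C \in components s t S -> C' \in components s t S ->
  w \in C -> w \in C' -> C = C'.
Proof. by move=> CC CC' wC wC'; rewrite (comp_mem CC wC) (comp_mem CC' wC'). Qed.

Lemma cycle_of (S : {set E}) (G : {set node m}) (f : node m -> node m) v :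
  v \in G ->
  (forall u, u \in G -> f u \in G /\ exists e, [/\ e \in S, s e = u & t e = f u]) ->
  has_cycle s t S.
Proof.
move=> vG Hf.
pose h n := iter n f v.
have hG n : h n \in G by elim: n => [|n IH] //=; exact: (Hf _ IH).1.
have ex : exists b, [exists a : 'I_b, h a == h b].
  have : [exists b : 'I_#|node m|.+2, [exists a : 'I_b, h a == h b]].
    apply/contraT => /existsPn nex.
    have inj : injective (fun i : 'I_#|node m|.+1 => h i).
      move=> a b /eqP hab; apply/val_inj/eqP; apply/contraT => ab.
      case: (ltngtP a b) ab => // [lt|lt] _.
      - move: (nex (@Ordinal _ b (leqW (ltn_ord b)))) => /existsPn /(_ (Ordinal lt)).
        by rewrite /= hab.
      - move: (nex (@Ordinal _ a (leqW (ltn_ord a)))) => /existsPn /(_ (Ordinal lt)).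
        by rewrite /= eq_sym hab.
    by have := leq_card _ inj; rewrite !card_ord ltnn.
  by case/existsP => b H; exists b.
case: (ex_minnP ex) => b /existsP [a /eqP hab] bmin.
have [e0 _] : exists e, e \in S by have [_ [e [eS _ _]]] := Hf v vG; exists e.
pose k := (b - a).-1.
have kE : k.+1 = b - a by rewrite /k; have := ltn_ord a; lia.
pose vs (l : 'I_k.+1) := h (a + l).
pose es (l : 'I_k.+1) := odflt e0 [pick e in S | (s e == vs l) && (t e == f (vs l))].
have esP l : [/\ es l \in S, s (es l) = vs l & t (es l) = f (vs l)].
  rewrite /es; case: pickP => [e /andP[eS /andP[/eqP -> /eqP ->]]|] //.
  have [_ [e [eS se te]]] := Hf _ (hG (a + l)).
  by move/(_ e); rewrite eS se te !eqxx.
have vinj : injective vs.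
  have key (l l' : 'I_k.+1) : l < l' -> vs l = vs l' -> False.
    move=> ll' e; have lb : (l' < b - a)%N by rewrite -kE ltn_ord.
    have := bmin (a + l').
    have -> // : [exists a0 : 'I_(a + l'), h a0 == h (a + l')].
      apply/existsP; exists (@Ordinal _ (a + l) (etrans (ltn_add2l a l l') ll')); exact/eqP.
    lia.
  move=> l l' e; apply/val_inj; case: (ltngtP l l') => // lt.
  - by case: (key _ _ lt e).
  - by case: (key _ _ lt (esym e)).
exists k, es, vs; split.
- by move=> l l' e; apply: vinj; have [_ <- _] := esP l; have [_ <- _] := esP l'; rewrite e.
- exact: vinj.
- by move=> l; have [] := esP l.
move=> l; have [_ se te] := esP l; rewrite /joins se te eqxx /=.
apply/orP; left; apply/eqP.
rewrite /vs /=.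
change (h (a + l).+1 = h (a + (l.+1 %% k.+1))).
case: (ltnP l k) => lk.
- by rewrite modn_small ?addnS // ltnS.
- have lE : (l : nat) = k by have := ltn_ord l; lia.
  rewrite lE modnn addn0 -addnS kE hab.
  have -> : a + (b - a) = b by have := ltn_ord a; lia.
  by [].
Qed.
End Aux.
Lemma Smono (mb : nat -> nat) a b : (a <= b)%N ->
  (\sum_(1 <= l < a) mb l <= \sum_(1 <= l < b) mb l)%N.
Proof.
move=> ab; case: a ab => [|a] ab; first by rewrite big_geq.
by rewrite (@big_cat_nat _ _ _ a.+1 1 b) //= leq_addr.
Qed.

Lemma msum (mb : nat -> nat) d m : m = (\sum_(i < d.+1) mb i)%N ->
  m = (mb 0 + \sum_(1 <= l < d.+1) mb l)%N.
Proof. by move=> ->; rewrite -(big_mkord xpredT) big_ltn. Qed.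

Lemma disjN (mb : nat -> nat) d m : m = (\sum_(i < d.+1) mb i)%N ->
  forall j j' k, (j <= d)%N -> (j' <= d)%N -> inN mb m j k -> inN mb m j' k -> j = j'.
Proof.
move=> /msum Hm.
have key j j' k : (j < j')%N -> (j' <= d)%N -> inN mb m j k -> inN mb m j' k -> False.
  move=> jj' j'd; rewrite /inN /inN0 /inNpos.
  have -> : (j' == 0) = false by case: j' jj' {j'd}.
  case: eqP => [j0|_].
  - have := Smono mb (j'd : j'.+1 <= d.+1)%N. lia.
  - have := Smono mb (jj' : j.+1 <= j')%N. lia.
move=> j j' k jd j'd H1 H2; case: (ltngtP j j') => // lt.
- by case: (key _ _ _ lt j'd H1 H2).
- by case: (key _ _ _ lt jd H2 H1).
Qed.

Lemma coverN (mb : nat -> nat) d m : m = (\sum_(i < d.+1) mb i)%N ->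
  forall k, (0 < k <= m.+1)%N -> exists2 j, (j <= d)%N & inN mb m j k.
Proof.
move=> /msum Hm k /andP[k0 km].
case: (ltnP (\sum_(1 <= l < d.+1) mb l) k) => kS.
  by exists 0 => //; rewrite /inN /inN0 /=; apply/andP; split => //; lia.
have gen n : (k <= \sum_(1 <= l < n.+1) mb l)%N ->
    exists2 j, (1 <= j <= n)%N & inNpos mb j k.
  elim: n => [|n IH]; first by rewrite big_geq //; lia.
  case: (leqP k (\sum_(1 <= l < n.+1) mb l)) => kn.
    by case: (IH kn) => j /andP[j1 jn] H; exists j => //; rewrite j1 /= ltnW.
  by move=> kn2; exists n.+1 => //; rewrite /inNpos; apply/andP.
case: (gen d kS) => j /andP[j1 jd] H; exists j => //.
by rewrite /inN; case: eqP j1 => // ->.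
Qed.

Theorem lemma4p5
  (R : comPzRingType) (le : rel R) (HR : po_ring le)
  (d : nat) (mb : nat -> nat) (m : nat)
  (Hm : m = (\sum_(i < d.+1) mb i)%N)
  (A : 'M[R]_m) (b : 'cV[R]_m)
  (HA : forall (i : nat) (l j : 'I_m), (1 <= i <= d)%N ->
          inN mb m i l.+1 -> ~~ inN mb m i j.+1 -> A l j = 0%R)
  (Hb : forall (i : nat) (l l' : 'I_m), (1 <= i <= d)%N ->
          inN mb m i l.+1 -> inN mb m i l'.+1 ->
          b l ord0 != 0%R -> b l' ord0 != 0%R -> l = l')
  (jsel : nat -> nat)
  (Hj : forall i : nat, (1 <= i <= d)%N -> inN mb m i (jsel i))
  (Hbj : forall l : 'I_m, (l.+1 <= m - mb 0%N)%N ->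
          (forall i : nat, (1 <= i <= d)%N -> jsel i != l.+1) -> b l ord0 = 0%R)
  (E : finType) (s t : E -> 'I_m.+1) (pi : E -> R)
  (Hloop : forall e, s e != t e)
  (Hcomp : A_compatible d mb jsel A b s t pi) :
  (forall (S : {set E}) (C : {set 'I_m.+1}) (r : 'I_m.+1) (i : nat),
     forest s t S -> C \in components s t S -> rooted_at s t S C r ->
     (i <= d)%N -> (exists2 v, v \in C & inN mb m i (pidx v)) ->
     inN mb m i (pidx r) || inN mb m 0 (pidx r))
  /\
  (forall B : {set 'I_m.+1}, #|B| = #|Fset m d jsel| ->
     (exists i : nat, (1 <= i <= d)%N /\
        exists x y, [/\ x \in B, y \in B, x != y,
                        inN mb m i (pidx x) & inN mb m i (pidx y)]) ->
     forall S : {set E}, ~ Theta s t (Fset m d jsel) B S).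
Proof.
have [Hc1 _] := Hcomp.
have cov (u : 'I_m.+1) : exists2 j, (j <= d)%N & inN mb m j (pidx u).
  by apply: (coverN Hm); rewrite /pidx ltn_ord.
have partI : forall (S : {set E}) (C : {set 'I_m.+1}) (r : 'I_m.+1) (i : nat),
     forest s t S -> C \in components s t S -> rooted_at s t S C r ->
     (i <= d)%N -> (exists2 v, v \in C & inN mb m i (pidx v)) ->
     inN mb m i (pidx r) || inN mb m 0 (pidx r).
  move=> S C r i forS CC [rC rt] id [v vC vi].
  pose P (u : 'I_m.+1) := inN mb m i (pidx u) || inN mb m 0 (pidx u).
  have clos e : P (s e) -> P (t e).
    have [j jd jt] := cov (t e).
    case/orP => Hs.
    - case: (eqVneq j 0) => [j0|jn0]; first by rewrite /P -j0 jt orbT.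
      case: (eqVneq j i) => [ji|jni]; first by rewrite /P -ji jt.
      have := Hc1 e i j id; rewrite lt0n jn0 jd => /(_ isT) H.
      by move: (H (nesym (elimN eqP jni)) Hs); rewrite jt.
    - case: (eqVneq j 0) => [j0|jn0]; first by rewrite /P -j0 jt orbT.
      have := Hc1 e 0 j (leq0n d); rewrite lt0n jn0 jd => /(_ isT) H.
      by move: (H (nesym (elimN eqP jn0)) Hs); rewrite jt.
  apply/contraT => nPr.
  pose G := [set u in C | P u].
  pose f u := odflt u (omap t [pick e in S | (s e == u) && (t e \in C)]).
  exfalso; apply: forS; apply: (@cycle_of _ _ s t S G f v).
    by rewrite inE vC /P vi.
  move=> u; rewrite inE => /andP[uC Pu].
  have ur : u <> r by move=> E0; move: nPr; rewrite -E0; move: Pu; rewrite /P => ->.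
  have : [exists e in S, (s e == u) && (t e \in C)].
    by apply/contraT => H; case: ur; apply/(rt u uC).
  case/existsP => e0 /andP[e0S /andP[/eqP se0 te0]].
  rewrite /f; case: pickP => [e /andP[eS /andP[/eqP se te]]|]; last first.
    by move/(_ e0); rewrite e0S se0 eqxx te0.
  split; first by rewrite inE te /= clos // se.
  by exists e.
split => //.
move=> B cardB [i [/andP[i1 id] [x [y [xB yB xy xi yi]]]]] S [forS ccard Hc].
pose sinkb (C : {set 'I_m.+1}) r := (r \in C) && ~~ [exists e in S, (s e == r) && (t e \in C)].
have root_sink C r : rooted_at s t S C r -> forall u, sinkb C u = (u == r).
  move=> [rC H] u; rewrite /sinkb; case uC: (u \in C) => /=.
    apply/idP/eqP => [/(proj1 (H u uC))//|->]; exact/(proj2 (H r rC)).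
  by apply/esym/eqP => urr; rewrite urr rC in uC.
pose g C := odflt x [pick r | sinkb C r].
have gP C : C \in components s t S -> rooted_at s t S C (g C) /\ g C \in B.
  move=> CC; have [_ [r rB rr]] := Hc C CC.
  rewrite /g; case: pickP => [u Hu|H].
    have E0 : u == r by rewrite -(root_sink _ _ rr u).
    by rewrite (eqP E0).
  have := H r; rewrite /= (root_sink _ _ rr r) eqxx //.
have ginj : {in components s t S &, injective g}.
  move=> C C' CC CC' e; have [[gC _] _] := gP C CC; have [[gC' _] _] := gP C' CC'.
  by apply: (comp_share CC CC' gC); rewrite e.
have imB : g @: components s t S = B.
  apply/eqP; rewrite eqEcard card_in_imset // ccard leqnn andbT.
  by apply/subsetP => z /imsetP [C CC ->]; exact: (gP C CC).2.
have i0 : i != 0 by case: i i1 {id xi yi}.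
have key C : C \in components s t S -> inN mb m i (pidx (g C)) ->
    exists2 w, w \in C & pidx w = jsel i.
  move=> CC gi; have [[f fF fC] _] := Hc C CC.
  have [rg _] := gP C CC.
  have [j jd jf] := cov f.
  have fi : inN mb m i (pidx f).
    case/orP: (partI S C (g C) j forS CC rg jd (ex_intro2 _ _ f fC jf)) => H.
    - by have := disjN Hm id jd gi H => ->.
    - by have := disjN Hm id (leq0n d) gi H => E0; rewrite E0 in i0.
  exists f => //.
  move: fF; rewrite inE => /orP[/eqP fm|/existsP[i' /andP[i'0 /eqP ji']]].
  - have : inN mb m 0 (pidx f) by rewrite fm /inN /inN0 /= leqnn andbT; lia.
    by move=> H; have := disjN Hm id (leq0n d) fi H => E0; rewrite E0 in i0.
  - have i'd : (1 <= i' <= d)%N by rewrite i'0 -ltnS ltn_ord.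
    have := Hj i' i'd; rewrite ji' => H.
    have := disjN Hm id (proj2 (andP i'd)) fi H => E0.
    by rewrite -ji' E0.
rewrite -imB in xB yB.
case/imsetP: xB => Cx CxC xE; case/imsetP: yB => Cy CyC yE.
have := key Cx CxC; rewrite -xE => /(_ xi) [wx wxC wxE].
have := key Cy CyC; rewrite -yE => /(_ yi) [wy wyC wyE].
have wxy : wx = wy by apply/val_inj; rewrite /pidx in wxE wyE; apply: succn_inj; rewrite wxE wyE.
have CE : Cx = Cy by apply: (comp_share CxC CyC wxC); rewrite wxy.
by move: xy; rewrite xE yE CE eqxx.
Qed.
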